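(* Let $n\ge 3$ and let $\mathcal{M}$ be a uniform oriented matroid of rank $3$ on $n$ elements. Then $\operatorname{diam}(G^*(\mathcal{M}))=n-1$ $(=n-r+2)$.
   Context: Sign vectors: for a finite set $E$ and $X\in\{+,-,0\}^E$, write $X^+=\{e:X_e=+\}$, $X^-=\{e:X_e=-\}$, $X^0=\{e:X_e=0\}$, $\operatorname{supp}(X)=X^+\cup X^-$, and $-X$ for the componentwise negation. For sign vectors $X,Y$, the separating set is $S(X,Y)=(X^+\cap Y^-)\cup(X^-\cap Y^+)$, and the composition $X\circ Y$ is given by $(X\circ Y)_e=X_e$ if $X_e\neq 0$ and $(X\circ Y)_e=Y_e$ otherwise. An oriented matroid $\mathcal{M}=(E,\mathcal{C}^* )$ is a finite set $E$ together with a set $\mathcal{C}^*\subseteq\{+,-,0\}^E$ of (signed) cocircuits satisfying: (CC0) $\mathbf{0}\notin\mathcal{C}^*$; (CC1) $X\in\mathcal{C}^*\Rightarrow -X\in\mathcal{C}^*$; (CC2) if $X,Y\in\mathcal{C}^*$ and $\operatorname{supp}(X)\subseteq\operatorname{supp}(Y)$ then $X=\pm Y$; (CC3) if $X,Y\in\mathcal{C}^*$, $X\neq -Y$ and $e\in S(X,Y)$, then there is $Z\in\mathcal{C}^*$ with $Z^+\subseteq (X^+\cup Y^+)\setminus\{e\}$ and $Z^-\subseteq (X^-\cup Y^-)\setminus\{e\}$. The covectors of $\mathcal{M}$ are $\mathbf{0}$ together with all compositions $X^1\circ\cdots\circ X^k$ ($k\ge 1$) of cocircuits, partially ordered componentwise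 by $0<+$ and $0<-$ ($+,-$ incomparable). The rank $r$ of $\mathcal{M}$ is the largest $k$ such that there is a chain $\mathbf{0}=V_0<V_1<\cdots<V_k$ of covectors. $\mathcal{M}$ is uniform if $|X^0|=r-1$ for every cocircuit $X$. The cocircuit graph $G^*(\mathcal{M})$ has the cocircuits as vertices, with distinct cocircuits $X,Y$ adjacent iff $|X^0\cap Y^0|\ge r-2$ and $S(X,Y)=\emptyset$. $\operatorname{diam}(G^*(\mathcal{M}))$ is the maximum graph distance between two cocircuits. *)

(* Defs.v *)
From mathcomp Require Import all_boot.
Set Implicit Arguments. Unset Strict Implicit. Unset Printing Implicit Defensive.

(* Signs are encoded as option bool: None = 0, Some true = +, Some false = -. *)
Notation sign := (option bool).
Notation svec E := {ffun E -> sign}.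

Section SignVectors.
Variable E : finType.

Definition sv0 : svec E := [ffun _ => None].
Definition zeros (X : svec E) : {set E} := [set e | X e == None].
Definition supp (X : svec E) : {set E} := [set e | X e != None].
Definition pos (X : svec E) : {set E} := [set e | X e == Some true].
Definition neg (X : svec E) : {set E} := [set e | X e == Some false].
Definition negsv (X : svec E) : svec E := [ffun e => omap negb (X e)].
Definition sep (X Y : svec E) : {set E} :=
  (pos X :&: neg Y) :|: (neg X :&: pos Y).
Definition comp (X Y : svec E) : svec E :=
  [ffun e => if X e is Some b then Some b else Y e].

(* Cocircuit axioms (CC0)-(CC3). *)
Definition oriented_matroid (C : {set svec E}) : Prop :=
  [/\ sv0 \notin C,
      (forall X, X \in C -> negsv X \in C),
      (forall X Y, X \in C -> Y \in C -> supp X \subset supp Y ->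
         X = Y \/ X = negsv Y)
    & (forall X Y e, X \in C -> Y \in C -> X <> negsv Y -> e \in sep X Y ->
         exists2 Z, Z \in C &
           pos Z \subset (pos X :|: pos Y) :\ e /\
           neg Z \subset (neg X :|: neg Y) :\ e)].

Definition covector (C : {set svec E}) (V : svec E) : Prop :=
  V = sv0 \/
  exists s : seq (svec E),
    [/\ s != [::], all (fun X => X \in C) s & foldr comp sv0 s = V].

Definition sv_le (X Y : svec E) : bool := [forall e, (X e == None) || (X e == Y e)].
Definition sv_lt (X Y : svec E) : bool := (X != Y) && sv_le X Y.

Definition has_chain (C : {set svec E}) (k : nat) : Prop :=
  exists V : nat -> svec E,
    [/\ V 0 = sv0,
        (forall i, i <= k -> covector C (V i))
      & (forall i, i < k -> sv_lt (V i) (V i.+1))].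

Definition is_rank (C : {set svec E}) (r : nat) : Prop :=
  has_chain C r /\ (forall k, has_chain C k -> k <= r).

Definition uniform (C : {set svec E}) (r : nat) : Prop :=
  forall X, X \in C -> #|zeros X| = r - 1.

Definition cocirc_adj (C : {set svec E}) (r : nat) (X Y : svec E) : bool :=
  [&& X \in C, Y \in C, X != Y, r - 2 <= #|zeros X :&: zeros Y|
    & sep X Y == set0].

Definition walk (C : {set svec E}) (r : nat) (X Y : svec E) (k : nat) : Prop :=
  exists p : seq (svec E),
    [/\ size p = k, path (cocirc_adj C r) X p & last X p = Y].

Definition cocirc_diam (C : {set svec E}) (r : nat) (d : nat) : Prop :=
  (forall X Y, X \in C -> Y \in C -> exists2 k, k <= d & walk C r X Y k) /\
  (exists X Y, [/\ X \in C, Y \in C & forall k, k < d -> ~ walk C r X Y k]).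

End SignVectors.

(* Main.v *)
Require Import Defs.
From mathcomp Require Import all_boot zify.
Set Implicit Arguments. Unset Strict Implicit. Unset Printing Implicit Defensive.


Lemma sepP (E : finType) (X Y : svec E) g :
  (g \in sep X Y) = [&& X g != None, Y g != None & X g != Y g].
Proof. rewrite !inE; case: (X g) => [[]|]; case: (Y g) => [[]|] //. Qed.

Lemma negsvE (E : finType) (X : svec E) g : negsv X g = omap negb (X g).
Proof. by rewrite ffunE. Qed.

Lemma negsvK (E : finType) (X : svec E) : negsv (negsv X) = X.
Proof. by apply/ffunP=> g; rewrite !ffunE; case: (X g) => [[]|]. Qed.

Lemma elimP (E : finType) (C : {set svec E}) X Y e :
  oriented_matroid C -> X \in C -> Y \in C -> X <> negsv Y -> e \in sep X Y ->
  exists2 Z, Z \in C & forall g, Z g = None \/ (g != e /\ (Z g = X g \/ Z g = Y g)).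
Proof.
case=> _ _ _ H3 XC YC nXY eS.
have [Z ZC [Hp Hn]] := H3 X Y e XC YC nXY eS.
exists Z => // g.
case Zg: (Z g) => [b|]; [right|by left].
case: b Zg => Zg.
- have : g \in pos Z by rewrite inE Zg.
  move/(subsetP Hp); rewrite !inE => /andP[-> /orP[] /eqP ->]; auto.
- have : g \in neg Z by rewrite inE Zg.
  move/(subsetP Hn); rewrite !inE => /andP[-> /orP[] /eqP ->]; auto.
Qed.

Lemma zeros_eq2 (E : finType) (C : {set svec E}) X a b :
  uniform C 3 -> X \in C -> X a = None -> X b = None -> a != b ->
  zeros X = [set a; b].
Proof.
move=> HU XC Xa Xb ab.
apply/esym/eqP; rewrite eqEcard cards2 ab (HU X XC) /= andbT.
by apply/subsetP => g; rewrite !inE => /orP[]/eqP->; apply/eqP.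
Qed.

Lemma walk_cat (E : finType) (C : {set svec E}) r (X Y Z : svec E) m1 m2 :
  walk C r X Y m1 -> walk C r Y Z m2 -> walk C r X Z (m1 + m2).
Proof.
case=> p [sp pp lp] [q [sq pq lq]]; exists (p ++ q); split.
- by rewrite size_cat sp sq.
- by rewrite cat_path pp lp pq.
- by rewrite last_cat lp.
Qed.

Lemma adj_walk (E : finType) (C : {set svec E}) X W a : X \in C -> W \in C ->
  X a = None -> W a = None -> X != W -> sep X W == set0 -> walk C 3 X W 1.
Proof.
move=> XC WC Xa Wa XW S0; exists [:: W]; split => //=.
rewrite andbT /cocirc_adj XC WC XW S0 andbT /=.
by apply/card_gt0P; exists a; rewrite !inE Xa Wa.
Qed.

Lemma walk_line (E : finType) (C : {set svec E}) a :
  oriented_matroid C ->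
  forall X W, X \in C -> W \in C -> X a = None -> W a = None -> X != W -> X <> negsv W ->
  exists2 m, m <= #|sep X W| + 1 & walk C 3 X W m.
Proof.
move=> HOM X W.
move: {2}#|sep X W| (leqnn #|sep X W|) => k.
elim: k X W => [|k IH] X W Hk XC WC Xa Wa XW nXW.
  exists 1; first by rewrite addnC leq_addr.
  apply: (adj_walk XC WC Xa Wa XW).
  by rewrite -cards_eq0 -leqn0.
have [S0|/set0Pn [e eS]] := eqVneq (sep X W) set0.
  exists 1; first by rewrite addnC leq_addr.
  by apply: (adj_walk XC WC Xa Wa XW); apply/eqP.
have [Z ZC HZ] := elimP HOM XC WC nXW eS.
move: (eS); rewrite sepP => /and3P[Xe We XWe].
have Ze : Z e = None by case: (HZ e) => [//|[]]; rewrite eqxx.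
have Za : Z a = None by case: (HZ a) => [//|[_ [->|->]]].
have s1: sep X Z \subset sep X W :\ e.
  apply/subsetP=> g; rewrite in_setD1 !sepP => /and3P[Xg Zg XZ].
  case: (HZ g) => [Zg0|[ge [ZX|ZW]]]; first by rewrite Zg0 in Zg.
  - by rewrite ZX eqxx in XZ.
  - by rewrite ge Xg -ZW Zg XZ.
have s2: sep Z W \subset sep X W :\ e.
  apply/subsetP=> g; rewrite in_setD1 !sepP => /and3P[Zg Wg ZW].
  case: (HZ g) => [Zg0|[ge [ZX|ZW']]]; first by rewrite Zg0 in Zg.
  - by rewrite ge -ZX Zg Wg ZW.
  - by rewrite ZW' eqxx in ZW.
have dj: sep X Z :&: sep Z W = set0.
  apply/setP=> g; rewrite in_setI in_set0 !sepP.
  apply/negP => /andP[/and3P[Xg Zg XZ] /and3P[_ Wg ZW]].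
  case: (HZ g) => [Zg0|[ge [ZX|ZW']]]; first by rewrite Zg0 in Zg.
  - by rewrite ZX eqxx in XZ.
  - by rewrite ZW' eqxx in ZW.
have cD := cardsD1 e (sep X W); rewrite eS /= in cD.
have cU := cardsUI (sep X Z) (sep Z W); rewrite dj cards0 addn0 in cU.
have cS : #|sep X Z :|: sep Z W| <= #|sep X W :\ e|.
  by apply: subset_leq_card; rewrite subUset s1 s2.
have XZ : X != Z by apply/eqP => XZ; rewrite XZ Ze in Xe.
have nXZ : X <> negsv Z by move=> XZ'; rewrite XZ' negsvE Ze in Xe.
have ZW : Z != W by apply/eqP => ZW; rewrite -ZW Ze in We.
have nZW : Z <> negsv W.
  by move=> ZW'; move: We; rewrite -(negsvK W) negsvE -ZW' Ze.
have ar : #|sep X Z| + #|sep Z W| + 1 <= #|sep X W| /\ #|sep X W| <= k.+1.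
  by split => //; rewrite -cU cD add1n addn1 ltnS.
have h1 : #|sep X Z| <= k.
  by move: ar; move: #|sep X Z| #|sep Z W| #|sep X W| => n1 n2 n3 [ar1 ar2]; clear -ar1 ar2; lia.
have h2 : #|sep Z W| <= k.
  by move: ar; move: #|sep X Z| #|sep Z W| #|sep X W| => n1 n2 n3 [ar1 ar2]; clear -ar1 ar2; lia.
have [m1 Hm1 w1] := IH X Z h1 XC ZC Xa Za XZ nXZ.
have [m2 Hm2 w2] := IH Z W h2 ZC WC Za Wa ZW nZW.
exists (m1 + m2); last exact: walk_cat w1 w2.
move: ar Hm1 Hm2; move: #|sep X Z| #|sep Z W| #|sep X W| => n1 n2 n3 [ar1 ar2] H1 H2; clear -ar1 ar2 H1 H2; lia.
Qed.

Definition full (E : finType) (C : {set svec E}) (a : E) :=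
  forall c, c != a -> exists2 Z, Z \in C & Z a = None /\ Z c = None.

Lemma fullF (E : finType) (C : {set svec E}) a X Y b :
  oriented_matroid C -> X \in C -> Y \in C -> X a = None -> Y a = None ->
  X b = None -> Y b != None -> full C a.
Proof.
move=> HOM XC YC Xa Ya Xb Yb c ca.
case Xc: (X c) => [x|]; last by exists X.
case Yc: (Y c) => [y|]; last by exists Y.
have [Y' [Y'C Y'a Y'b Y'c]] : exists Y', [/\ Y' \in C, Y' a = None, Y' b != None
   & Y' c = Some (~~ x)].
  have [HOM0 HOM1 _ _] := HOM.
  case: (eqVneq x y) => [xy|xy].
  - exists (negsv Y); split; rewrite ?negsvE ?Ya ?Yc ?xy //; first exact: HOM1.
    by move: Yb; case: (Y b).
  - exists Y; split => //; rewrite Yc; congr Some.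
    by case: x y xy {Xc Yc} => [] [].
have nXY : X <> negsv Y'.
  by move=> E1; move: Yb; rewrite E1 negsvE in Xb; move: Y'b; case: (Y' b) Xb.
have cS : c \in sep X Y' by rewrite sepP Xc Y'c /=; case: x {Xc Y'c}.
have [Z ZC HZ] := elimP HOM XC Y'C nXY cS.
exists Z => //; split.
- by case: (HZ a) => [//|[_ [->|->]]].
- by case: (HZ c) => [//|[]]; rewrite eqxx.
Qed.

Lemma foldr_comp_None (E : finType) (s : seq (svec E)) e :
  (foldr (@Defs.comp E) (sv0 E) s e == None) = all (fun X : svec E => X e == None) s.
Proof.
elim: s => [|X s IH] /=; first by rewrite ffunE.
by rewrite ffunE; case: (X e).
Qed.

Lemma sv_lt_card (E : finType) (X Y : svec E) : sv_lt X Y -> #|zeros Y| < #|zeros X|.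
Proof.
case/andP=> XY /forallP le; apply: proper_card; rewrite properEneq.
have sub : zeros Y \subset zeros X.
  apply/subsetP => g; rewrite !inE => /eqP Yg.
  by have := le g; case/orP => // /eqP ->; rewrite Yg.
rewrite sub andbT; apply/negP => /eqP Hz; move/negP: XY; apply; apply/eqP/ffunP => g.
have := le g; case/orP => [/eqP Xg|/eqP->] //.
rewrite Xg; have: g \in zeros X by rewrite inE Xg.
by rewrite -Hz inE => /eqP ->.
Qed.

Lemma covector_seq (E : finType) (C : {set svec E}) V : covector C V -> V <> sv0 E ->
  exists X s, [/\ all (fun X : svec E => X \in C) (X :: s) & foldr (@Defs.comp E) (sv0 E) (X :: s) = V].
Proof.
case=> [->//|[s [sn Hs <-]]] _; case: s sn Hs => [//|X s] _ Hs; by exists X, s.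
Qed.

Definition nz (E : finType) (X V : svec E) := [set g | (X g != None) && (V g != None)].

Lemma sep_neg (E : finType) (X V : svec E) : #|sep X V| + #|sep X (negsv V)| = #|nz X V|.
Proof.
have D : sep X V :&: sep X (negsv V) = set0.
  apply/setP => g; rewrite in_setI in_set0 !sepP negsvE.
  by case: (X g) => [[]|]; case: (V g) => [[]|].
have U : sep X V :|: sep X (negsv V) = nz X V.
  apply/setP => g; rewrite in_setU !sepP negsvE inE.
  by case: (X g) => [[]|]; case: (V g) => [[]|].
by rewrite -cardsUI D cards0 addn0 U.
Qed.

Lemma sep_sym (E : finType) (X Y : svec E) : sep X Y = sep Y X.
Proof.
apply/setP => g; rewrite !sepP.
by case: (X g) => [[]|]; case: (Y g) => [[]|].
Qed.

Lemma sep_nz (E : finType) (X Y : svec E) : sep X Y \subset nz X Y.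
Proof. by apply/subsetP => g; rewrite sepP inE => /and3P[-> ->]. Qed.

Lemma zeros_neg (E : finType) (X : svec E) : zeros (negsv X) = zeros X.
Proof. by apply/setP => g; rewrite !inE negsvE; case: (X g). Qed.

Lemma nz_card (E : finType) (C : {set svec E}) X V : uniform C 3 -> X \in C -> V \in C ->
  zeros X != zeros V -> #|nz X V| <= #|E| - 3.
Proof.
move=> HU0 XC VC ne.
have HU : forall X, X \in C -> #|zeros X| = 2 := HU0.
have nzE : nz X V = ~: (zeros X :|: zeros V) by apply/setP => g; rewrite !inE negb_or.
have cC := cardsC (zeros X :|: zeros V).
have cU := cardsUI (zeros X) (zeros V).
have cI : #|zeros X :&: zeros V| <= 1.
  rewrite leqNgt; apply/negP => h.
  have e1 : zeros X :&: zeros V = zeros X.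
    by apply/eqP; rewrite eqEcard subsetIl HU.
  have e2 : zeros X :&: zeros V = zeros V.
    by apply/eqP; rewrite eqEcard subsetIr HU.
  by move/eqP: ne; apply; rewrite -e1 e2.
rewrite nzE; move: cC cU cI; rewrite (HU _ XC) (HU _ VC).
move: #|_ :|: _| #|~: _| #|_ :&: _| #|E| => n1 n2 n3 n4; lia.
Qed.

Lemma path_sign (E : finType) (C : {set svec E}) e : forall p (W : svec E),
  path (cocirc_adj C 3) W p -> W e != None ->
  all (fun V : svec E => V e != None) p -> last W p e = W e.
Proof.
elim=> [|V p IH] W //=.
case/andP => /and5P[_ _ _ _ /eqP S0] pp We /andP[Ve Vs].
have VW : V e = W e.
  apply/eqP; apply/negPn/negP => ne.
  have : e \in sep W V by rewrite sepP We Ve eq_sym ne.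
  by rewrite S0 inE.
by rewrite IH // VW.
Qed.

Lemma path_count (E : finType) (C : {set svec E}) : uniform C 3 -> forall p (W : svec E),
  path (cocirc_adj C 3) W p ->
  #|[set e | has (fun V : svec E => V e == None) p] :\: zeros W| <= size p.
Proof.
move=> HU0; have HU : forall X, X \in C -> #|zeros X| = 2 := HU0.
elim=> [|V p IH] W /=.
  by move=> _; rewrite leqn0 cards_eq0; apply/eqP/setP => g; rewrite !inE /= ?andbF.
case/andP => /and5P[_ VC _ cI _] pp.
have sub : [set e | (V e == None) || has (fun V0 : svec E => V0 e == None) p] :\: zeros W
   \subset (zeros V :\: zeros W) :|: ([set e | has (fun V0 : svec E => V0 e == None) p] :\: zeros V).
  apply/subsetP => g; rewrite !inE.
  by case: (W g == None); case: (V g == None); case: has.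
have c1 : #|zeros V :\: zeros W| <= 1.
  rewrite cardsD (HU _ VC) setIC; move: cI; move: #|_ :&: _| => m; lia.
have c2 := IH V pp.
have cU := cardsUI (zeros V :\: zeros W) ([set e | has (fun V0 : svec E => V0 e == None) p] :\: zeros V).
apply: leq_trans (subset_leq_card sub) _.
apply: leq_trans (leq_addr #|(zeros V :\: zeros W) :&: ([set e | has (fun V0 : svec E => V0 e == None) p] :\: zeros V)| _) _.
by rewrite cU -add1n; apply: leq_add.
Qed.

Lemma all_full (E : finType) (C : {set svec E}) :
  3 <= #|E| -> oriented_matroid C -> is_rank C 3 -> uniform C 3 ->
  (exists X, X \in C) /\ forall a, full C a.
Proof.
move=> hE HOM [[V [V0 Vcov Vlt]] _] HU0.
have HU : forall X, X \in C -> #|zeros X| = 2 := HU0.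
have c12 := sv_lt_card (Vlt 1 isT).
have c23 := sv_lt_card (Vlt 2 isT).
have zs0 : zeros (sv0 E) = setT by apply/setP => g; rewrite !inE ffunE.
have V1nz : V 1 <> sv0 E.
  by case/andP: (Vlt 0 isT) => /eqP h _ h'; apply: h; rewrite V0 h'.
have [X1 [s1 [all1 f1]]] := covector_seq (Vcov 1 isT) V1nz.
have X1C : X1 \in C by case/andP: all1.
have c1 : #|zeros (V 1)| <= 2.
  rewrite -(HU X1 X1C); apply: subset_leq_card; apply/subsetP => g.
  by rewrite -f1 !inE foldr_comp_None /= => /andP[].
have V2nz : V 2 <> sv0 E.
  by move=> h; move: c12; rewrite h zs0 cardsT; lia.
have V3nz : V 3 <> sv0 E.
  by move=> h; move: c23 c12; rewrite h zs0 cardsT; lia.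
have [X2 [s2 [all2 f2]]] := covector_seq (Vcov 2 isT) V2nz.
have [X3 [s3 [all3 f3]]] := covector_seq (Vcov 3 isT) V3nz.
have X2C : X2 \in C by case/andP: all2.
have [a' a'z] : exists a', a' \in zeros (V 2).
  by case/card_gt0P: (leq_ltn_trans (leq0n _) c23) => x; exists x.
have a'all : all (fun X : svec E => X a' == None) (X2 :: s2).
  by move: a'z; rewrite -f2 inE foldr_comp_None.
have X2a' : X2 a' = None by apply/eqP; case/andP: a'all.
have [b bz] : exists b, b \in zeros X2 :\ a'.
  apply/card_gt0P; have := cardsD1 a' (zeros X2).
  rewrite HU // inE X2a' eqxx /=; lia.
move: bz; rewrite in_setD1 => /andP[ba' X2b].
have bV2 : b \notin zeros (V 2).
  apply/negP => bV; have : [set a'; b] \subset zeros (V 2).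
    by apply/subsetP => g; rewrite in_set2 => /orP[]/eqP->.
  move/subset_leq_card; rewrite cards2 eq_sym ba'; lia.
move: bV2; rewrite inE -f2 foldr_comp_None => /allPn [Y YS Yb].
have YC : Y \in C by move/allP: all2 => /(_ Y YS).
have Ya' : Y a' = None by move/allP: a'all => /(_ Y YS) /eqP.
move: X2b; rewrite inE => /eqP X2b.
have fa' := fullF HOM X2C YC X2a' Ya' X2b Yb.
have a'V3 : a' \notin zeros (V 3).
  apply/negP => h; have : 0 < #|zeros (V 3)| by apply/card_gt0P; exists a'.
  lia.
move: a'V3; rewrite inE -f3 foldr_comp_None => /allPn [W WS Wa'].
have WC : W \in C by move/allP: all3 => /(_ W WS).
have [p pz] : exists p, p \in zeros W by apply/card_gt0P; rewrite HU.
move: pz; rewrite inE => /eqP Wp.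
have pa' : p != a' by apply/eqP => h; rewrite -h Wp in Wa'.
have [Z0 Z0C [Z0a' Z0p]] := fa' p pa'.
have fp := fullF HOM Z0C WC Z0p Wp Z0a' Wa'.
split; first by exists X1.
move=> a.
have [->//|aa'] := eqVneq a a'.
have [->//|ap] := eqVneq a p.
have [X4 X4C [X4a' X4a]] := fa' a aa'.
have [Y4 Y4C [Y4p Y4a]] := fp a ap.
apply: (fullF HOM X4C Y4C X4a Y4a X4a').
apply/negP => /eqP Y4a'.
have pa : p != a by rewrite eq_sym.
have := zeros_eq2 HU0 Y4C Y4p Y4a pa.
move/setP => /(_ a'); rewrite inE Y4a' eqxx in_set2.
by rewrite (eq_sym a' p) (negbTE pa') (eq_sym a' a) (negbTE aa').
Qed.

Lemma one_side (E : finType) (C : {set svec E}) X Y V a c d :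
  oriented_matroid C -> X \in C -> Y \in C -> V \in C ->
  X a = None -> V a = None -> V c = None -> X c != None ->
  V d = None -> Y d = None -> zeros V != zeros Y ->
  exists2 k, k <= #|sep X V| + #|sep V Y| + 2 & walk C 3 X Y k.
Proof.
move=> HOM XC YC VC Xa Va Vc Xc Vd Yd ne.
have XV : X != V by apply/eqP => h; rewrite h Vc in Xc.
have nXV : X <> negsv V by move=> h; rewrite h negsvE Vc in Xc.
have VY : V != Y by apply/eqP => h; rewrite h eqxx in ne.
have nVY : V <> negsv Y by move=> h; rewrite h zeros_neg eqxx in ne.
have [m1 H1 w1] := walk_line HOM XC VC Xa Va XV nXV.
have [m2 H2 w2] := walk_line HOM VC YC Vd Yd VY nVY.
exists (m1 + m2); last exact: walk_cat w1 w2.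
move: H1 H2; move: #|sep X V| #|sep V Y| => a1 a2 H1 H2; clear -H1 H2; lia.
Qed.

Lemma via (E : finType) (C : {set svec E}) X Y V a c d :
  3 <= #|E| -> oriented_matroid C -> uniform C 3 -> X \in C -> Y \in C -> V \in C ->
  X a = None -> V a = None -> V c = None -> X c != None ->
  V d = None -> Y d = None -> zeros V != zeros Y ->
  exists2 k, k <= #|E| - 1 & walk C 3 X Y k.
Proof.
move=> hE HOM HU XC YC VC Xa Va Vc Xc Vd Yd ne.
have [_ HOM1 _ _] := HOM.
have VC' := HOM1 V VC.
have [k1 H1 w1] := one_side HOM XC YC VC Xa Va Vc Xc Vd Yd ne.
have Va' : negsv V a = None by rewrite negsvE Va.
have Vc' : negsv V c = None by rewrite negsvE Vc.
have Vd' : negsv V d = None by rewrite negsvE Vd.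
have ne' : zeros (negsv V) != zeros Y by rewrite zeros_neg.
have [k2 H2 w2] := one_side HOM XC YC VC' Xa Va' Vc' Xc Vd' Yd ne'.
have s1 := sep_neg X V.
have s2 := sep_neg Y V.
rewrite sep_sym (sep_sym Y (negsv V)) in s2.
have neXV : zeros X != zeros V.
  by apply/eqP => /setP /(_ c); rewrite !inE Vc eqxx (negbTE Xc).
have n1 := nz_card HU XC VC neXV.
have neYV : zeros Y != zeros V by rewrite eq_sym.
have n2 := nz_card HU YC VC neYV.
case: (leqP (#|sep X V| + #|sep V Y|) (#|E| - 3)) => h.
  exists k1 => //; move: H1 h hE; move: (#|sep X V| + #|sep V Y|) #|E| => m n H1 h hE; clear -H1 h hE; lia.
exists k2 => //; move: H2 h s1 s2 n1 n2 hE.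
move: #|sep X V| #|sep V Y| #|sep X (negsv V)| #|sep (negsv V) Y| #|nz X V| #|nz Y V| #|E|.
move=> m1 m2 m3 m4 m5 m6 m7 A1 A2 A3 A4 A5 A6 A7; clear -A1 A2 A3 A4 A5 A6 A7; lia.
Qed.

Theorem theorem4p2 (E : finType) (C : {set {ffun E -> option bool}}) :
  3 <= #|E| ->
  oriented_matroid C -> is_rank C 3 -> uniform C 3 ->
  cocirc_diam C 3 (#|E| - 1).
Proof.
move=> hE HOM HR HU0.
have HU : forall X, X \in C -> #|zeros X| = 2 := HU0.
have [[X0 X0C] Hfull] := all_full hE HOM HR HU0.
have [_ HOM1 HOM2 _] := HOM.
have nzex : forall X, X \in C -> exists c, X c != None.
  move=> X XC; have := cardsC (zeros X); rewrite (HU _ XC) => h.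
  have : 0 < #|~: zeros X| by move: h hE; move: #|~: _| #|E| => m n h hE'; clear -h hE'; lia.
  by case/card_gt0P => c; rewrite !inE => hc; exists c.
split.
- move=> X Y XC YC.
  have [->|XY] := eqVneq X Y; first by exists 0 => //; exists [::].
  case: (boolP [exists a, (X a == None) && (Y a == None)]) =>
     [/existsP [a /andP[/eqP Xa /eqP Ya]] | nocom].
  + case: (eqVneq X (negsv Y)) => [XnY|nXY].
    * have [c Xc] := nzex X XC.
      have ca : c != a by apply/eqP => h; rewrite h Xa in Xc.
      have [V VC [Va Vc]] := Hfull a c ca.
      apply: (via hE HOM HU0 XC YC VC Xa Va Vc Xc Va Ya).
      apply/eqP => /setP /(_ c); rewrite !inE Vc eqxx => /esym /eqP Yc.
      by move: Xc; rewrite XnY negsvE Yc.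
    * have neXY : zeros X != zeros Y.
        apply/eqP => h; have : supp X \subset supp Y.
          by apply/subsetP => g; move/setP: h => /(_ g); rewrite !inE => ->.
        by case/(HOM2 X Y XC YC) => h'; [move/eqP: XY|move/eqP: nXY].
      have [m Hm w] := walk_line HOM XC YC Xa Ya XY (fun h => (negP nXY) (introT eqP h)).
      exists m => //.
      have := subset_leq_card (sep_nz X Y).
      have := nz_card HU0 XC YC neXY.
      move: Hm hE; move: #|sep X Y| #|nz X Y| #|E| => n1 n2 n3 A1 A2 A3 A4; clear -A1 A2 A3 A4; lia.
  + have [a aX] : exists a, a \in zeros X by apply/card_gt0P; rewrite HU.
    have [c cY] : exists c, c \in zeros Y by apply/card_gt0P; rewrite HU.
    move: aX cY; rewrite !inE => /eqP Xa /eqP Yc.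
    have Ya : Y a != None.
      by apply/negP => /eqP Ya; move/negP: nocom; apply; apply/existsP; exists a; rewrite Xa Ya.
    have Xc : X c != None.
      by apply/negP => /eqP Xc; move/negP: nocom; apply; apply/existsP; exists c; rewrite Xc Yc.
    have ca : c != a by apply/eqP => h; rewrite h Xa in Xc.
    have [V VC [Va Vc]] := Hfull a c ca.
    apply: (via hE HOM HU0 XC YC VC Xa Va Vc Xc Vc Yc).
    apply/eqP => /setP /(_ a); rewrite !inE Va eqxx => /esym /eqP Ya'.
    by rewrite Ya' in Ya.
- exists X0, (negsv X0); split => //; first exact: HOM1.
  move=> k kn [p [sp pp lp]].
  have [e Xe] := nzex X0 X0C.
  have negne : forall g, X0 g != None -> negsv X0 g != X0 g.
    by move=> g; rewrite negsvE; case: (X0 g) => [[]|].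
  case/lastP: p sp pp lp => [|p' y] sp pp lp.
    by move: (negne e Xe); rewrite /= in lp; rewrite -lp eqxx.
  rewrite last_rcons in lp; subst y.
  rewrite size_rcons in sp.
  have pp' : path (cocirc_adj C 3) X0 p' by move: pp; rewrite rcons_path => /andP[].
  have sub : ~: zeros X0 \subset
      [set g | has (fun V : svec E => V g == None) p'] :\: zeros X0.
    apply/subsetP => g; rewrite !inE => Xg; rewrite Xg /=.
    apply/negPn/negP => hn.
    have al : all (fun V : svec E => V g != None) (rcons p' (negsv X0)).
      rewrite all_rcons negsvE; apply/andP; split.
        by move: Xg; case: (X0 g).
      apply/allP => V Vp; apply/negP => /eqP Vg; move/negP: hn; apply; apply/hasP; exists V => //.
      by rewrite Vg.
    have := path_sign pp Xg al; rewrite last_rcons => h.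
    by move: (negne g Xg); rewrite h eqxx.
  have c1 := subset_leq_card sub.
  have c2 := path_count HU0 pp'.
  have c3 := cardsC (zeros X0); rewrite (HU _ X0C) in c3.
  move: c1 c2 c3 kn hE sp.
  move: #|~: zeros X0| #|_ :\: zeros X0| (size p') #|E| => n1 n2 n3 n4 A1 A2 A3 A4 A5 A6; clear -A1 A2 A3 A4 A5 A6; lia.
Qed.
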